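(* There exist constants $K$ and $M$ such that the following holds. Let $k\ge K$ be an integer and $a,b,b'\in(\frac1{10},10)$ with $b\le b'$. Let $u_1=\cos(ky)e^{-k\sqrt b\,t}$ and $u_2=\cos(ky)e^{-k\sqrt{b'}\,t}$, which solve respectively $\ddot u_1+\operatorname{div}\left[\begin{pmatrix}a&0\\0&b\end{pmatrix}\nabla u_1\right]=0$ and $\ddot u_2+\operatorname{div}\left[\begin{pmatrix}a&0\\0&b'\end{pmatrix}\nabla u_2\right]=0$. For every $t_1\ge0$ and $c_1>0$, with $c_2>0$ defined by $c_1e^{-k\sqrt b\,t_1}=c_2e^{-k\sqrt{b'}\,t_1}$, there exist a $C^2$ function $u$ and a $C^1$ real $2\times 2$ matrix function $A$ in the regularity class $R(80,10)$ with $\ddot u+\operatorname{div}(A\nabla u)=0$ on $\mathbb{T}^2\times\mathbb{R}$, such that $u=c_1u_1$, $A=\begin{pmatrix}a&0\\0&b\end{pmatrix}$ for $t\le t_1$, and $u=c_2u_2$, $A=\begin{pmatrix}a&0\\0&b'\end{pmatrix}$ for $t\ge t_1+400$. Moreover, for $t\in[t_1,t_1+400]$, $u=g(t)\cos(ky)$ with $g\in C^2$ and $|g^{(\alpha)}(t)|\le Mc_1k^\alpha e^{-k\sqrt b\,t}$ for $0\le\alpha\le2$.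
   Context: $\mathbb{T}^2=(\mathbb{R}/2\pi\mathbb{Z})^2$ with coordinates $(x,y)$; $t$ the third coordinate. $\ddot u+\operatorname{div}(A\nabla u)$ means $\partial_t^2u+\sum_{i,j\in\{x,y\}}\partial_i(A_{ij}\partial_ju)$. Regularity class $R(\Lambda,C)$: $\Lambda^{-1}|\xi|^2\le\xi^TA\xi\le\Lambda|\xi|^2$ for all $\xi\in\mathbb{R}^2$ at every point, and the entries of $A$ are $C^1$ with all first partial derivatives in $x,y,t$ bounded by $C$ in absolute value. *)

(* Defs.v *)
From Stdlib Require Import Reals Lra ZArith.
From Coquelicot Require Import Coquelicot.
Open Scope R_scope.

(* Functions on T^2 x R are represented as functions R -> R -> R -> R
   (arguments x y t) that are 2*PI-periodic in x and in y. *)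
Definition fun3 := R -> R -> R -> R.

Definition periodic_xy (f : fun3) : Prop :=
  forall x y t, f (x + 2 * PI) y t = f x y t /\ f x (y + 2 * PI) t = f x y t.

Definition dx (f : fun3) : fun3 := fun x y t => Derive (fun s => f s y t) x.
Definition dy (f : fun3) : fun3 := fun x y t => Derive (fun s => f x s t) y.
Definition dt (f : fun3) : fun3 := fun x y t => Derive (fun s => f x y s) t.

Definition cont3 (f : fun3) : Prop :=
  forall x y t eps, 0 < eps -> exists delta, 0 < delta /\
    forall x' y' t', Rabs (x' - x) < delta -> Rabs (y' - y) < delta ->
      Rabs (t' - t) < delta -> Rabs (f x' y' t' - f x y t) < eps.

Definition C1_3 (f : fun3) : Prop :=
  cont3 f /\
  (forall x y t,
     ex_derive (fun s => f s y t) x /\ ex_derive (fun s => f x s t) y /\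
     ex_derive (fun s => f x y s) t) /\
  cont3 (dx f) /\ cont3 (dy f) /\ cont3 (dt f).

Definition C2_3 (f : fun3) : Prop :=
  C1_3 f /\ C1_3 (dx f) /\ C1_3 (dy f) /\ C1_3 (dt f).

Definition C2_1 (g : R -> R) : Prop :=
  (forall t, ex_derive g t /\ ex_derive (Derive g) t) /\
  (forall t, continuity_pt (Derive_n g 2) t).

Record mat2field := Mat2 { A11 : fun3; A12 : fun3; A21 : fun3; A22 : fun3 }.

Definition wave_op (A : mat2field) (u : fun3) : fun3 := fun x y t =>
  dt (dt u) x y t
  + dx (fun x y t => A11 A x y t * dx u x y t + A12 A x y t * dy u x y t) x y t
  + dy (fun x y t => A21 A x y t * dx u x y t + A22 A x y t * dy u x y t) x y t.

Definition reg_class (Lam C : R) (A : mat2field) : Prop :=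
  (forall x y t xi1 xi2,
     let q := xi1 * (A11 A x y t * xi1 + A12 A x y t * xi2)
            + xi2 * (A21 A x y t * xi1 + A22 A x y t * xi2) in
     / Lam * (xi1 ^ 2 + xi2 ^ 2) <= q /\ q <= Lam * (xi1 ^ 2 + xi2 ^ 2)) /\
  (forall e, (e = A11 A \/ e = A12 A \/ e = A21 A \/ e = A22 A) ->
     C1_3 e /\ forall x y t,
       Rabs (dx e x y t) <= C /\ Rabs (dy e x y t) <= C /\ Rabs (dt e x y t) <= C).

Definition periodic_mat (A : mat2field) : Prop :=
  periodic_xy (A11 A) /\ periodic_xy (A12 A) /\
  periodic_xy (A21 A) /\ periodic_xy (A22 A).

Definition is_diag (A : mat2field) (x y t p q : R) : Prop :=
  A11 A x y t = p /\ A12 A x y t = 0 /\ A21 A x y t = 0 /\ A22 A x y t = q.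

(* Main.v *)
Require Import Defs.
From Stdlib Require Import Reals ZArith.
From Coquelicot Require Import Coquelicot.
From Stdlib Require Import Lra Psatz FunctionalExtensionality.
Open Scope R_scope.

Definition cont1 (f : R -> R) : Prop :=
  forall x eps, 0 < eps -> exists d, 0 < d /\ forall y, Rabs (y - x) < d -> Rabs (f y - f x) < eps.

Lemma cont1_cpt f : cont1 f -> forall x, continuity_pt f x.
Proof.
  intros H x eps Heps. destruct (H x eps Heps) as [d [Hd Hy]].
  exists d; split; [lra|]. intros y [_ Hy']. apply Hy. exact Hy'.
Qed.

Lemma cpt_cont1 f : (forall x, continuity_pt f x) -> cont1 f.
Proof.
  intros H x eps Heps. destruct (H x eps Heps) as [d [Hd Hy]].
  exists d; split; [lra|]. intros y Hyx.
  destruct (Req_dec y x) as [->|Hne].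
  - rewrite Rminus_eq_0, Rabs_R0. exact Heps.
  - apply (Hy y). split; [split; [exact I| auto]|exact Hyx].
Qed.

Lemma deriv_cpt f f' x : is_derive f x f' -> continuity_pt f x.
Proof.
  intros H. apply continuity_pt_filterlim. apply (ex_derive_continuous (V:=R_NormedModule) f x). exists f'. exact H.
Qed.

Definition glue (a : R) (f1 f2 : R -> R) (x : R) : R :=
  if Rle_dec x a then f1 x else f2 x.

Lemma glue_derive a f1 f2 d1 d2 :
  (forall x, is_derive f1 x (d1 x)) -> (forall x, is_derive f2 x (d2 x)) ->
  f1 a = f2 a -> d1 a = d2 a ->
  forall x, is_derive (glue a f1 f2) x (glue a d1 d2 x).
Proof.
  intros H1 H2 E0 E1 x. apply is_derive_Reals.
  destruct (Rtotal_order x a) as [Hlt|[Heq|Hgt]].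
  - intros eps Heps. destruct (proj1 (is_derive_Reals _ _ _) (H1 x) eps Heps) as [d1' Hd].
    assert (Hp : 0 < Rmin d1' (a - x)) by (apply Rmin_pos; [apply cond_pos|lra]).
    exists (mkposreal _ Hp). intros h Hh Hhd. simpl in Hhd.
    unfold glue. destruct (Rle_dec x a); [|lra].
    destruct (Rle_dec (x + h) a) as [_|Hn].
    + apply Hd; auto. apply Rlt_le_trans with (1 := Hhd). apply Rmin_l.
    + exfalso. apply Hn. assert (Rabs h < a - x) by (apply Rlt_le_trans with (1 := Hhd); apply Rmin_r).
      apply Rabs_def2 in H. lra.
  - subst x. intros eps Heps.
    destruct (proj1 (is_derive_Reals _ _ _) (H1 a) eps Heps) as [e1 Hd1].
    destruct (proj1 (is_derive_Reals _ _ _) (H2 a) eps Heps) as [e2 Hd2].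
    assert (Hp : 0 < Rmin e1 e2) by (apply Rmin_pos; apply cond_pos).
    exists (mkposreal _ Hp). intros h Hh Hhd. simpl in Hhd.
    unfold glue. destruct (Rle_dec a a) as [_|Hn]; [|lra].
    destruct (Rle_dec (a + h) a).
    + apply Hd1; auto. apply Rlt_le_trans with (1 := Hhd). apply Rmin_l.
    + rewrite E0, E1. apply Hd2; auto. apply Rlt_le_trans with (1 := Hhd). apply Rmin_r.
  - intros eps Heps. destruct (proj1 (is_derive_Reals _ _ _) (H2 x) eps Heps) as [d1' Hd].
    assert (Hp : 0 < Rmin d1' (x - a)) by (apply Rmin_pos; [apply cond_pos|lra]).
    exists (mkposreal _ Hp). intros h Hh Hhd. simpl in Hhd.
    unfold glue. destruct (Rle_dec x a); [lra|].
    destruct (Rle_dec (x + h) a) as [Hn|_].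
    + exfalso. assert (Rabs h < x - a) by (apply Rlt_le_trans with (1 := Hhd); apply Rmin_r).
      apply Rabs_def2 in H. lra.
    + apply Hd; auto. apply Rlt_le_trans with (1 := Hhd). apply Rmin_l.
Qed.

Lemma glue_cont a f1 f2 : cont1 f1 -> cont1 f2 -> f1 a = f2 a -> cont1 (glue a f1 f2).
Proof.
  intros H1 H2 E x eps Heps.
  destruct (Rtotal_order x a) as [Hlt|[Heq|Hgt]].
  - destruct (H1 x eps Heps) as [d [Hd Hy]].
    exists (Rmin d (a - x)). split; [apply Rmin_pos; lra|].
    intros y Hyx. assert (Rabs (y - x) < d) by (apply Rlt_le_trans with (1 := Hyx); apply Rmin_l).
    assert (Rabs (y - x) < a - x) by (apply Rlt_le_trans with (1 := Hyx); apply Rmin_r).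
    apply Rabs_def2 in H0. unfold glue.
    destruct (Rle_dec y a); [|lra]. destruct (Rle_dec x a); [|lra]. auto.
  - subst x. destruct (H1 a eps Heps) as [d1 [Hd1 Hy1]].
    destruct (H2 a eps Heps) as [d2 [Hd2 Hy2]].
    exists (Rmin d1 d2). split; [apply Rmin_pos; lra|].
    intros y Hyx. unfold glue. destruct (Rle_dec a a) as [_|]; [|lra].
    destruct (Rle_dec y a).
    + apply Hy1. apply Rlt_le_trans with (1 := Hyx); apply Rmin_l.
    + rewrite E. apply Hy2. apply Rlt_le_trans with (1 := Hyx); apply Rmin_r.
  - destruct (H2 x eps Heps) as [d [Hd Hy]].
    exists (Rmin d (x - a)). split; [apply Rmin_pos; lra|].
    intros y Hyx. assert (Rabs (y - x) < d) by (apply Rlt_le_trans with (1 := Hyx); apply Rmin_l).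
    assert (Rabs (y - x) < x - a) by (apply Rlt_le_trans with (1 := Hyx); apply Rmin_r).
    apply Rabs_def2 in H0. unfold glue.
    destruct (Rle_dec y a); [lra|]. destruct (Rle_dec x a); [lra|]. auto.
Qed.


Lemma prod_bound (a a' c c' e : R) :
  0 < e -> e <= 1 -> Rabs (a' - a) < e -> Rabs (c' - c) < e ->
  Rabs (a' * c' - a * c) < e * (Rabs a + Rabs c + 1).
Proof.
  intros He He1 Ha Hc.
  replace (a' * c' - a * c) with ((a' - a) * c' + a * (c' - c)) by ring.
  eapply Rle_lt_trans; [apply Rabs_triang|]. rewrite !Rabs_mult.
  assert (Rabs c' <= Rabs c + 1).
  { replace c' with (c + (c' - c)) by ring. eapply Rle_trans; [apply Rabs_triang|]. lra. }
  assert (0 <= Rabs (a' - a)) by apply Rabs_pos.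
  assert (0 <= Rabs a) by apply Rabs_pos.
  assert (0 <= Rabs c) by apply Rabs_pos.
  assert (0 <= Rabs c') by apply Rabs_pos.
  assert (0 <= Rabs (c' - c)) by apply Rabs_pos.
  assert (Rabs (a' - a) * Rabs c' <= e * (Rabs c + 1)).
  { apply Rmult_le_compat; lra. }
  assert (Rabs a * Rabs (c' - c) <= Rabs a * e) by (apply Rmult_le_compat_l; lra).
  assert (Hcase : Rabs (a' - a) * Rabs c' < e * (Rabs c + 1) \/ Rabs a * Rabs (c' - c) < Rabs a * e \/ Rabs a = 0).
  { destruct (Req_dec (Rabs a) 0); [right; right; auto|right; left].
    apply Rmult_lt_compat_l; lra. }
  destruct Hcase as [Hc6|[Hc6|Hc6]].
  - nra.
  - nra.
  - rewrite Hc6 in *. nra.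
Qed.

Lemma cont3_sep G H : cont1 G -> cont1 H -> cont3 (fun x y t => G t * H y).
Proof.
  intros HG HH x y t eps Heps.
  set (m := Rabs (G t) + Rabs (H y) + 1).
  assert (Hm : 0 < m) by (unfold m; pose proof (Rabs_pos (G t)); pose proof (Rabs_pos (H y)); lra).
  set (e := Rmin 1 (eps / m)).
  assert (He : 0 < e) by (apply Rmin_pos; [lra|apply Rdiv_lt_0_compat; lra]).
  destruct (HG t e He) as [d1 [Hd1 Hy1]].
  destruct (HH y e He) as [d2 [Hd2 Hy2]].
  exists (Rmin d1 d2). split; [apply Rmin_pos; lra|].
  intros x' y' t' _ Hy Ht.
  eapply Rlt_le_trans.
  - apply prod_bound.
    + exact He.
    + apply Rmin_l.
    + apply Hy1. eapply Rlt_le_trans; [exact Ht| apply Rmin_l].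
    + apply Hy2. eapply Rlt_le_trans; [exact Hy| apply Rmin_r].
  - fold m. assert (e <= eps / m) by apply Rmin_r.
    apply Rmult_le_compat_r with (r := m) in H0; [|lra].
    unfold Rdiv in H0. rewrite Rmult_assoc, Rinv_l in H0; lra.
Qed.

Lemma cont1_const c : cont1 (fun _ => c).
Proof. intros x eps He. exists 1. split; [lra|]. intros. rewrite Rminus_eq_0, Rabs_R0; auto. Qed.

Lemma C1_sep G G' H H' :
  (forall t, is_derive G t (G' t)) -> (forall y, is_derive H y (H' y)) ->
  cont1 G -> cont1 G' -> cont1 H -> cont1 H' ->
  C1_3 (fun x y t => G t * H y) /\
  dx (fun x y t => G t * H y) = (fun x y t => 0 * H y) /\
  dy (fun x y t => G t * H y) = (fun x y t => G t * H' y) /\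
  dt (fun x y t => G t * H y) = (fun x y t => G' t * H y).
Proof.
  intros dG dH cG cG' cH cH'.
  assert (Ex : dx (fun x y t => G t * H y) = (fun x y t => 0 * H y)).
  { apply functional_extensionality; intro x; apply functional_extensionality; intro y;
    apply functional_extensionality; intro t. unfold dx. rewrite Derive_const. ring. }
  assert (Ey : dy (fun x y t => G t * H y) = (fun x y t => G t * H' y)).
  { apply functional_extensionality; intro x; apply functional_extensionality; intro y;
    apply functional_extensionality; intro t. unfold dy. apply is_derive_unique.
    apply is_derive_scal. apply dH. }
  assert (Et : dt (fun x y t => G t * H y) = (fun x y t => G' t * H y)).
  { apply functional_extensionality; intro x; apply functional_extensionality; intro y;
    apply functional_extensionality; intro t. unfold dt. apply is_derive_unique.
    apply (is_derive_ext (fun s => H y * G s) _ _ _ (fun s => Rmult_comm _ _)).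
    replace (G' t * H y) with (H y * G' t) by ring. apply is_derive_scal. apply dG. }
  split; [|split; [exact Ex|split; [exact Ey|exact Et]]].
  split; [apply cont3_sep; auto|].
  split.
  { intros x y t. split; [apply ex_derive_const|split].
    - exists (G t * H' y). apply is_derive_scal. apply dH.
    - exists (H y * G' t). apply (is_derive_ext (fun s => H y * G s) _ _ _ (fun s => Rmult_comm _ _)).
      apply is_derive_scal. apply dG. }
  rewrite Ex, Ey, Et. split; [|split]; apply cont3_sep; auto. apply cont1_const.
Qed.


Definition rp s := 80 * s^3 - 225 * s^4 + 216 * s^5 - 70 * s^6.
Definition Rp s := 20 * s^4 - 45 * s^5 + 36 * s^6 - 10 * s^7.
Definition rp1 s := 240 * s^2 - 900 * s^3 + 1080 * s^4 - 420 * s^5.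
Definition rp2 s := 480 * s - 2700 * s^2 + 4320 * s^3 - 2100 * s^4.
Definition rp3 s := 480 - 5400 * s + 12960 * s^2 - 8400 * s^3.

Definition Q t := 400 * Rp (t / 400).
Definition Q1 t := rp (t / 400).
Definition Q2 t := rp1 (t / 400) / 400.
Definition Q3 t := rp2 (t / 400) / 160000.
Definition Q4 t := rp3 (t / 400) / 64000000.

Lemma dQ t : is_derive Q t (Q1 t).
Proof. unfold Q, Q1, Rp, rp. auto_derive; [exact I|]. field. Qed.
Lemma dQ1 t : is_derive Q1 t (Q2 t).
Proof. unfold Q1, Q2, rp1, rp. auto_derive; [exact I|]. field. Qed.
Lemma dQ2 t : is_derive Q2 t (Q3 t).
Proof. unfold Q2, Q3, rp1, rp2. auto_derive; [exact I|]. field. Qed.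
Lemma dQ3 t : is_derive Q3 t (Q4 t).
Proof. unfold Q3, Q4, rp3, rp2. auto_derive; [exact I|]. field. Qed.

Lemma rp_bounds s : 0 <= s <= 1 -> 0 <= rp s <= 21/10.
Proof.
  intros Hs. unfold rp.
  assert (E : 80 * s^3 - 225 * s^4 + 216 * s^5 - 70 * s^6 =
     s^3 * (10 - 15 * s + 6 * s^2) + 70 * (s * (1 - s))^3) by ring.
  rewrite E.
  assert (A1 : 0 <= 10 - 15 * s + 6 * s^2) by nra.
  assert (A2 : s^3 * (10 - 15 * s + 6 * s^2) <= 1).
  { assert (1 - s^3 * (10 - 15 * s + 6 * s^2) = (1 - s)^3 * (1 + 3 * s + 6 * s^2)) by ring.
    assert (0 <= (1 - s)^3) by (apply pow_le; lra). nra. }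
  assert (A3 : 0 <= s * (1 - s) <= 1/4) by (pose proof (pow2_ge_0 (s - 1/2)); split; [apply Rmult_le_pos; lra| nra]).
  assert (0 <= s^3) by (apply pow_le; lra).
  assert (0 <= (s * (1 - s))^3) by (apply pow_le; lra).
  assert ((s * (1 - s))^3 <= (1/4)^3) by (apply pow_incr; lra).
  assert (0 <= s^3 * (10 - 15 * s + 6 * s^2)) by (apply Rmult_le_pos; lra).
  replace ((1/4)^3) with (1/64) in * by field. split; lra.
Qed.

Lemma rp1_bound s : 0 <= s <= 1 -> Rabs (rp1 s) <= 40.
Proof.
  intros Hs. unfold rp1.
  assert (E : 240 * s^2 - 900 * s^3 + 1080 * s^4 - 420 * s^5 =
    (s * (1 - s))^2 * (30 + 210 * (1 - 2 * s))) by ring.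
  rewrite E. assert (A3 : 0 <= s * (1 - s) <= 1/4) by (pose proof (pow2_ge_0 (s - 1/2)); split; [apply Rmult_le_pos; lra| nra]).
  assert (0 <= (s * (1 - s))^2 <= 1/16) by nra.
  apply Rabs_le. split; nra.
Qed.

Lemma rp2_bound s : 0 <= s <= 1 -> Rabs (rp2 s) <= 16000.
Proof.
  intros Hs. unfold rp2. assert (0 <= s^2 <= 1) by nra. assert (0 <= s^3 <= 1) by nra.
  assert (0 <= s^4 <= 1) by nra. apply Rabs_le. split; nra.
Qed.

Lemma Rp_nonneg s : 0 <= s <= 1 -> 0 <= Rp s.
Proof.
  intros Hs. unfold Rp.
  assert (E : 20 * s^4 - 45 * s^5 + 36 * s^6 - 10 * s^7 =
    s^4 * (1 + 3 * (1 - s) + 6 * (1 - s)^2 + 10 * (1 - s)^3)) by ring.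
  rewrite E. assert (0 <= s^4) by (apply pow_le; lra).
  assert (0 <= (1 - s)^3) by (apply pow_le; lra). nra.
Qed.

Lemma Q_0 : Q 0 = 0. Proof. unfold Q, Rp. field. Qed.
Lemma Q1_0 : Q1 0 = 0. Proof. unfold Q1, rp. field. Qed.
Lemma Q2_0 : Q2 0 = 0. Proof. unfold Q2, rp1. field. Qed.
Lemma Q3_0 : Q3 0 = 0. Proof. unfold Q3, rp2. field. Qed.
Lemma Q_400 : Q 400 = 400. Proof. unfold Q, Rp. field. Qed.
Lemma Q1_400 : Q1 400 = 1. Proof. unfold Q1, rp. field. Qed.
Lemma Q2_400 : Q2 400 = 0. Proof. unfold Q2, rp1. field. Qed.
Lemma Q3_400 : Q3 400 = 0. Proof. unfold Q3, rp2. field. Qed.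

Definition P := glue 0 (fun _ => 0) (glue 400 Q (fun t => t)).
Definition P1 := glue 0 (fun _ => 0) (glue 400 Q1 (fun _ => 1)).
Definition P2 := glue 0 (fun _ => 0) (glue 400 Q2 (fun _ => 0)).
Definition P3 := glue 0 (fun _ => 0) (glue 400 Q3 (fun _ => 0)).

Lemma glue_le a f1 f2 x : x <= a -> glue a f1 f2 x = f1 x.
Proof. intros; unfold glue; destruct (Rle_dec x a); [auto|lra]. Qed.
Lemma glue_gt a f1 f2 x : a < x -> glue a f1 f2 x = f2 x.
Proof. intros; unfold glue; destruct (Rle_dec x a); [lra|auto]. Qed.

Lemma dP t : is_derive P t (P1 t).
Proof.
  unfold P, P1. apply glue_derive.
  - intro; apply (is_derive_const (V:=R_NormedModule)).
  - apply glue_derive.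
    + apply dQ.
    + intro; apply (is_derive_id (K:=R_AbsRing)).
    + exact Q_400.
    + exact Q1_400.
  - rewrite glue_le by lra. symmetry; exact Q_0.
  - rewrite glue_le by lra. symmetry; exact Q1_0.
Qed.

Lemma dP1 t : is_derive P1 t (P2 t).
Proof.
  unfold P1, P2. apply glue_derive.
  - intro; apply (is_derive_const (V:=R_NormedModule)).
  - apply glue_derive.
    + apply dQ1.
    + intro; apply (is_derive_const (V:=R_NormedModule)).
    + exact Q1_400.
    + exact Q2_400.
  - rewrite glue_le by lra. symmetry; exact Q1_0.
  - rewrite glue_le by lra. symmetry; exact Q2_0.
Qed.

Lemma dP2 t : is_derive P2 t (P3 t).
Proof.
  unfold P2, P3. apply glue_derive.
  - intro; apply (is_derive_const (V:=R_NormedModule)).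
  - apply glue_derive.
    + apply dQ2.
    + intro; apply (is_derive_const (V:=R_NormedModule)).
    + exact Q2_400.
    + exact Q3_400.
  - rewrite glue_le by lra. symmetry; exact Q2_0.
  - rewrite glue_le by lra. symmetry; exact Q3_0.
Qed.

Lemma cP3 : cont1 P3.
Proof.
  unfold P3. apply glue_cont.
  - apply cont1_const.
  - apply glue_cont.
    + apply cpt_cont1. intro x. exact (deriv_cpt _ _ _ (dQ3 x)).
    + apply cont1_const.
    + exact Q3_400.
  - rewrite glue_le by lra. symmetry; exact Q3_0.
Qed.

Lemma P_mid t : 0 < t <= 400 -> P t = Q t /\ P1 t = Q1 t /\ P2 t = Q2 t /\ P3 t = Q3 t.
Proof.
  intros H. unfold P, P1, P2, P3, glue.
  destruct (Rle_dec t 0); [lra|]. destruct (Rle_dec t 400); [auto|lra].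
Qed.

Lemma P_out t : ~ (0 < t <= 400) -> 0 <= P t /\ 0 <= P1 t <= 21/10 /\ P2 t = 0 /\ P3 t = 0.
Proof.
  intros H. unfold P, P1, P2, P3, glue.
  destruct (Rle_dec t 0); [lra|]. destruct (Rle_dec t 400); [lra|lra].
Qed.

Lemma P_props t :
  0 <= P t /\ 0 <= P1 t <= 21/10 /\ Rabs (P2 t) <= 1/10 /\ Rabs (P3 t) <= 1/10.
Proof.
  destruct (Rlt_le_dec 0 t) as [H0|H0]; [destruct (Rle_dec t 400) as [H1|H1]|].
  - destruct (P_mid t (conj H0 H1)) as [E1 [E2 [E3 E4]]]. rewrite E1, E2, E3, E4.
    assert (Hs : 0 <= t / 400 <= 1) by (split; unfold Rdiv; nra).
    unfold Q, Q1, Q2, Q3.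
    pose proof (Rp_nonneg _ Hs). pose proof (rp_bounds _ Hs).
    pose proof (rp1_bound _ Hs). pose proof (rp2_bound _ Hs).
    unfold Rdiv in *. rewrite !Rabs_mult, (Rabs_right (/400)), (Rabs_right (/160000)) by lra.
    split; [lra|split; [lra|split; lra]].
  - destruct (P_out t) as [A [B [-> ->]]]; [lra|]. rewrite Rabs_R0. lra.
  - destruct (P_out t) as [A [B [-> ->]]]; [lra|]. rewrite Rabs_R0. lra.
Qed.

Lemma P_left t : t <= 0 -> P t = 0 /\ P1 t = 0 /\ P2 t = 0.
Proof. intros; unfold P, P1, P2; rewrite !glue_le by lra; auto. Qed.

Lemma P_right t : 400 <= t -> P t = t /\ P1 t = 1 /\ P2 t = 0.
Proof.
  intros; destruct (Req_dec t 400) as [->|].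
  - destruct (P_mid 400) as [E1 [E2 [E3 E4]]]; [lra|]. rewrite E1, E2, E3.
    split; [exact Q_400|split; [exact Q1_400|exact Q2_400]].
  - unfold P, P1, P2, glue. destruct (Rle_dec t 0); [lra|]. destruct (Rle_dec t 400); [lra|auto].
Qed.


Lemma DP y : Derive (fun x => P x) y = P1 y.
Proof. apply is_derive_unique. apply dP. Qed.
Lemma DP1 y : Derive (fun x => P1 x) y = P2 y.
Proof. apply is_derive_unique. apply dP1. Qed.
Lemma DP2 y : Derive (fun x => P2 x) y = P3 y.
Proof. apply is_derive_unique. apply dP2. Qed.
Lemma EP y : ex_derive (fun x => P x) y.
Proof. eexists; apply dP. Qed.
Lemma EP1 y : ex_derive (fun x => P1 x) y.
Proof. eexists; apply dP1. Qed.
Lemma EP2 y : ex_derive (fun x => P2 x) y.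
Proof. eexists; apply dP2. Qed.

Ltac dsolve := auto_derive; repeat split; try (apply EP || apply EP1 || apply EP2);
  try rewrite ?DP, ?DP1, ?DP2.

Definition Phi b b' t1 t := sqrt b * t + (sqrt b' - sqrt b) * P (t - t1).
Definition Phi1 b b' t1 t := sqrt b + (sqrt b' - sqrt b) * P1 (t - t1).
Definition Phi2 b b' t1 t := (sqrt b' - sqrt b) * P2 (t - t1).
Definition Phi3 b b' t1 t := (sqrt b' - sqrt b) * P3 (t - t1).
Definition gg kr b b' t1 c1 t := c1 * exp (- kr * Phi b b' t1 t).
Definition g1 kr b b' t1 c1 t := - kr * Phi1 b b' t1 t * gg kr b b' t1 c1 t.
Definition g2 kr b b' t1 c1 t :=
  (kr ^ 2 * Phi1 b b' t1 t ^ 2 - kr * Phi2 b b' t1 t) * gg kr b b' t1 c1 t.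
Definition beta kr b b' t1 t := Phi1 b b' t1 t ^ 2 - Phi2 b b' t1 t / kr.
Definition beta1 kr b b' t1 t :=
  2 * Phi1 b b' t1 t * Phi2 b b' t1 t - Phi3 b b' t1 t / kr.

Lemma dgg kr b b' t1 c1 t : is_derive (gg kr b b' t1 c1) t (g1 kr b b' t1 c1 t).
Proof. unfold g1, gg, Phi, Phi1. dsolve. unfold Rminus. ring. Qed.

Lemma dg1 kr b b' t1 c1 t : is_derive (g1 kr b b' t1 c1) t (g2 kr b b' t1 c1 t).
Proof. unfold g2, g1, gg, Phi, Phi1, Phi2. dsolve. unfold Rminus. ring. Qed.

Lemma eg2 kr b b' t1 c1 t : ex_derive (g2 kr b b' t1 c1) t.
Proof. unfold g2, gg, Phi, Phi1, Phi2. auto_derive. repeat split; try (apply EP || apply EP1 || apply EP2). Qed.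

Lemma dbeta kr b b' t1 t : kr <> 0 -> is_derive (beta kr b b' t1) t (beta1 kr b b' t1 t).
Proof. intros. unfold beta, beta1, Phi1, Phi2, Phi3. dsolve. unfold Rminus. field. auto. Qed.


Lemma sqrt_facts b : / 10 < b < 10 -> 0 < sqrt b /\ sqrt b * sqrt b = b /\ sqrt b < 4.
Proof.
  intros Hb. assert (0 < sqrt b) by (apply sqrt_lt_R0; lra).
  assert (sqrt b * sqrt b = b) by (apply sqrt_sqrt; lra).
  split; [auto|split; [auto|nra]].
Qed.

Lemma Phi_bounds b b' t1 t :
  / 10 < b < 10 -> / 10 < b' < 10 -> b <= b' ->
  sqrt b <= Phi1 b b' t1 t <= 21/10 * sqrt b' /\
  Rabs (Phi2 b b' t1 t) <= 4/10 /\ Rabs (Phi3 b b' t1 t) <= 4/10 /\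
  0 <= sqrt b' - sqrt b <= 4.
Proof.
  intros Hb Hb' Hbb.
  destruct (sqrt_facts b Hb) as [s1 [s2 s3]].
  destruct (sqrt_facts b' Hb') as [s1' [s2' s3']].
  assert (sqrt b <= sqrt b') by (apply sqrt_le_1_alt; lra).
  destruct (P_props (t - t1)) as [p0 [p1 [p2 p3]]].
  unfold Phi1, Phi2, Phi3. rewrite !Rabs_mult, (Rabs_right (sqrt b' - sqrt b)) by lra.
  repeat split; try nra.
Qed.

Lemma beta_bounds kr b b' t1 t :
  100 <= kr -> / 10 < b < 10 -> / 10 < b' < 10 -> b <= b' ->
  / 80 <= beta kr b b' t1 t <= 80 /\ Rabs (beta1 kr b b' t1 t) <= 10.
Proof.
  intros Hk Hb Hb' Hbb.
  destruct (sqrt_facts b Hb) as [s1 [s2 s3]].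
  destruct (sqrt_facts b' Hb') as [s1' [s2' s3']].
  destruct (Phi_bounds b b' t1 t Hb Hb' Hbb) as [[f1 f2] [f3 [f4 [f5 f6]]]].
  apply Rabs_le_between in f3. apply Rabs_le_between in f4.
  unfold beta, beta1.
  set (x1 := Phi1 b b' t1 t) in *. set (x2 := Phi2 b b' t1 t) in *. set (x3 := Phi3 b b' t1 t) in *.
  assert (Hk1 : 0 < / kr <= / 100) by (split; [apply Rinv_0_lt_compat; lra| apply Rinv_le_contravar; lra]).
  assert (E2 : -(4/10) * / 100 <= x2 / kr <= 4/10 * / 100) by (unfold Rdiv; split; nra).
  assert (E3 : -(4/10) * / 100 <= x3 / kr <= 4/10 * / 100) by (unfold Rdiv; split; nra).
  assert (B1 : b <= x1 ^ 2) by nra.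
  assert (B2 : x1 ^ 2 <= (21/10)^2 * b') by nra.
  split; [split; lra|].
  apply Rabs_le_between.
  assert (Q1 : Rabs (2 * x1 * x2) <= 2 * (21/10 * 4) * (4/10)).
  { rewrite !Rabs_mult. rewrite (Rabs_right 2) by lra. rewrite (Rabs_right x1) by lra.
    assert (0 <= Rabs x2) by apply Rabs_pos.
    assert (x1 <= 21/10 * 4) by lra.
    assert (Rabs x2 <= 4/10) by (apply Rabs_le_between; lra).
    nra. }
  apply Rabs_le_between in Q1. lra.
Qed.


Lemma exp_le1 x : x <= 0 -> exp x <= 1.
Proof.
  intros H. destruct (Req_dec x 0) as [->|]; [rewrite exp_0; lra|].
  rewrite <- exp_0. left. apply exp_increasing. lra.
Qed.

Lemma gg_bound kr b b' t1 c1 t :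
  100 <= kr -> / 10 < b < 10 -> / 10 < b' < 10 -> b <= b' -> 0 < c1 ->
  0 < gg kr b b' t1 c1 t <= c1 * exp (- kr * sqrt b * t).
Proof.
  intros Hk Hb Hb' Hbb Hc.
  destruct (Phi_bounds b b' t1 t Hb Hb' Hbb) as [_ [_ [_ [f5 f6]]]].
  destruct (P_props (t - t1)) as [p0 _].
  unfold gg, Phi.
  replace (- kr * (sqrt b * t + (sqrt b' - sqrt b) * P (t - t1)))
    with (- kr * sqrt b * t + - (kr * (sqrt b' - sqrt b) * P (t - t1))) by ring.
  rewrite exp_plus.
  assert (0 < exp (- kr * sqrt b * t)) by apply exp_pos.
  assert (0 < exp (- (kr * (sqrt b' - sqrt b) * P (t - t1)))) by apply exp_pos.
  assert (exp (- (kr * (sqrt b' - sqrt b) * P (t - t1))) <= 1).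
  { apply exp_le1. assert (0 <= kr * (sqrt b' - sqrt b)) by nra. nra. }
  split; [apply Rmult_lt_0_compat; [lra| apply Rmult_lt_0_compat; lra]|].
  apply Rmult_le_compat_l; [lra|].
  rewrite <- (Rmult_1_r (exp (- kr * sqrt b * t))) at 2.
  apply Rmult_le_compat_l; lra.
Qed.

Lemma g_bounds kr b b' t1 c1 t :
  100 <= kr -> / 10 < b < 10 -> / 10 < b' < 10 -> b <= b' -> 0 < c1 ->
  Rabs (gg kr b b' t1 c1 t) <= 200 * c1 * kr ^ 0 * exp (- kr * sqrt b * t) /\
  Rabs (g1 kr b b' t1 c1 t) <= 200 * c1 * kr ^ 1 * exp (- kr * sqrt b * t) /\
  Rabs (g2 kr b b' t1 c1 t) <= 200 * c1 * kr ^ 2 * exp (- kr * sqrt b * t).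
Proof.
  intros Hk Hb Hb' Hbb Hc.
  destruct (gg_bound kr b b' t1 c1 t Hk Hb Hb' Hbb Hc) as [G1 G2].
  destruct (Phi_bounds b b' t1 t Hb Hb' Hbb) as [[f1 f2] [f3 [_ [f5 f6]]]].
  destruct (sqrt_facts b Hb) as [s1 [s2 s3]].
  destruct (sqrt_facts b' Hb') as [s1' [s2' s3']].
  apply Rabs_le_between in f3.
  unfold g1, g2.
  set (G := gg kr b b' t1 c1 t) in *. set (E := exp (- kr * sqrt b * t)) in *.
  set (x1 := Phi1 b b' t1 t) in *. set (x2 := Phi2 b b' t1 t) in *.
  assert (0 <= x1 <= 9) by lra.
  assert (0 <= c1 * E) by lra.
  simpl. rewrite !Rmult_1_r.
  repeat split; apply Rabs_le_between; split.
  - lra.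
  - lra.
  - assert (0 <= kr * x1 * G <= kr * 9 * (c1 * E)).
    { split; [apply Rmult_le_pos; [apply Rmult_le_pos|]; lra|].
      apply Rmult_le_compat; try lra. apply Rmult_le_pos; lra. apply Rmult_le_compat_l; lra. }
    nra.
  - assert (0 <= kr * x1 * G) by (apply Rmult_le_pos; [apply Rmult_le_pos|]; lra). nra.
  - assert (X1 : /10 <= x1 * x1 <= 81) by (split; nra).
    assert (0 <= kr * (kr * 1) * (x1 * (x1 * 1)) - kr * x2 <= 82 * (kr * (kr * 1))) by (split; nra).
    assert (0 <= (kr * (kr * 1) * (x1 * (x1 * 1)) - kr * x2) * G) by (apply Rmult_le_pos; lra).
    nra.
  - assert (X1 : /10 <= x1 * x1 <= 81) by (split; nra).
    assert (0 <= kr * (kr * 1) * (x1 * (x1 * 1)) - kr * x2 <= 82 * (kr * (kr * 1))) by (split; nra).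
    assert ((kr * (kr * 1) * (x1 * (x1 * 1)) - kr * x2) * G <= 82 * (kr * (kr * 1)) * (c1 * E)).
    { apply Rmult_le_compat; lra. }
    nra.
Qed.


Lemma cont1_deriv f f' : (forall x, is_derive f x (f' x)) -> cont1 f.
Proof. intros H. apply cpt_cont1. intro x. exact (deriv_cpt _ _ _ (H x)). Qed.

Lemma cont1_ex f : (forall x, ex_derive f x) -> cont1 f.
Proof. intros H. apply cpt_cont1. intro x. destruct (H x) as [l Hl]. exact (deriv_cpt _ _ _ Hl). Qed.

Lemma cont1_mult f g : cont1 f -> cont1 g -> cont1 (fun t => f t * g t).
Proof.
  intros Hf Hg x eps Heps. destruct (cont3_sep f g Hf Hg 0 x x eps Heps) as [d [Hd Hx]].
  exists d. split; auto. intros y Hy. apply (Hx 0 y y); auto. rewrite Rminus_eq_0, Rabs_R0; auto.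
Qed.

Lemma cont1_minus f g : cont1 f -> cont1 g -> cont1 (fun t => f t - g t).
Proof.
  intros Hf Hg x eps Heps.
  destruct (Hf x (eps/2)) as [d1 [Hd1 H1]]; [lra|].
  destruct (Hg x (eps/2)) as [d2 [Hd2 H2]]; [lra|].
  exists (Rmin d1 d2). split; [apply Rmin_pos; auto|]. intros y Hy.
  assert (A1 := H1 y (Rlt_le_trans _ _ _ Hy (Rmin_l _ _))).
  assert (A2 := H2 y (Rlt_le_trans _ _ _ Hy (Rmin_r _ _))).
  replace (f y - g y - (f x - g x)) with ((f y - f x) - (g y - g x)) by ring.
  eapply Rle_lt_trans; [apply Rabs_triang|]. rewrite Rabs_Ropp. lra.
Qed.

Lemma cont1_shift f c : cont1 f -> cont1 (fun t => f (t - c)).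
Proof.
  intros Hf x eps Heps. destruct (Hf (x - c) eps Heps) as [d [Hd H]].
  exists d. split; auto. intros y Hy. apply H. replace (y - c - (x - c)) with (y - x) by ring. auto.
Qed.

Lemma C1_ext F F' : (forall x y t, F x y t = F' x y t) -> C1_3 F -> C1_3 F'.
Proof.
  intros E H. replace F' with F; auto.
  apply functional_extensionality; intro x; apply functional_extensionality; intro y;
  apply functional_extensionality; intro t. auto.
Qed.

Lemma C1_sep' G G' H H' F :
  (forall t, is_derive G t (G' t)) -> (forall y, is_derive H y (H' y)) ->
  cont1 G -> cont1 G' -> cont1 H -> cont1 H' ->
  (forall x y t, G t * H y = F x y t) -> C1_3 F.
Proof.
  intros. eapply C1_ext; [exact H6|]. apply (C1_sep G G' H H'); auto.
Qed.

Definition uu kr b b' t1 c1 : fun3 := fun x y t => gg kr b b' t1 c1 t * cos (kr * y).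
Definition AA kr a b b' t1 : mat2field :=
  Mat2 (fun _ _ _ => a) (fun _ _ _ => 0) (fun _ _ _ => 0) (fun _ _ t => beta kr b b' t1 t).

Lemma dH kr y : is_derive (fun y => cos (kr * y)) y (- kr * sin (kr * y)).
Proof. auto_derive; auto. ring. Qed.
Lemma dH1 kr y : is_derive (fun y => - kr * sin (kr * y)) y (- kr * kr * cos (kr * y)).
Proof. auto_derive; auto. ring. Qed.
Lemma dH2 kr y : is_derive (fun y => - kr * kr * cos (kr * y)) y (kr * kr * kr * sin (kr * y)).
Proof. auto_derive; auto. ring. Qed.

Ltac fext := apply functional_extensionality; intro x; apply functional_extensionality; intro y;
  apply functional_extensionality; intro t.

Lemma dxu kr b b' t1 c1 : dx (uu kr b b' t1 c1) = fun x y t => 0.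
Proof. fext. unfold dx, uu. apply Derive_const. Qed.

Lemma dyu kr b b' t1 c1 : dy (uu kr b b' t1 c1) =
  fun x y t => gg kr b b' t1 c1 t * (- kr * sin (kr * y)).
Proof. fext. unfold dy, uu. apply is_derive_unique. apply is_derive_scal. apply dH. Qed.

Lemma dtu kr b b' t1 c1 : dt (uu kr b b' t1 c1) =
  fun x y t => g1 kr b b' t1 c1 t * cos (kr * y).
Proof.
  fext. unfold dt, uu. apply is_derive_unique.
  apply (is_derive_ext (fun s => cos (kr * y) * gg kr b b' t1 c1 s) _ _ _ (fun s => Rmult_comm _ _)).
  replace (g1 kr b b' t1 c1 t * cos (kr * y)) with (cos (kr * y) * g1 kr b b' t1 c1 t) by ring.
  apply is_derive_scal. apply dgg.
Qed.

Lemma dtdtu kr b b' t1 c1 : dt (fun x y t => g1 kr b b' t1 c1 t * cos (kr * y)) =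
  fun x y t => g2 kr b b' t1 c1 t * cos (kr * y).
Proof.
  fext. unfold dt. apply is_derive_unique.
  apply (is_derive_ext (fun s => cos (kr * y) * g1 kr b b' t1 c1 s) _ _ _ (fun s => Rmult_comm _ _)).
  replace (g2 kr b b' t1 c1 t * cos (kr * y)) with (cos (kr * y) * g2 kr b b' t1 c1 t) by ring.
  apply is_derive_scal. apply dg1.
Qed.

Lemma wave_zero kr a b b' t1 c1 x y t : kr <> 0 ->
  wave_op (AA kr a b b' t1) (uu kr b b' t1 c1) x y t = 0.
Proof.
  intros Hk. unfold wave_op. rewrite dtu, dtdtu, dxu, dyu. cbn [A11 A12 A21 A22 AA].
  unfold dx, dy. rewrite Derive_const.
  rewrite (is_derive_unique _ _ (beta kr b b' t1 t * (gg kr b b' t1 c1 t * (- kr * kr * cos (kr * y))))).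
  - unfold g2, beta. field. auto.
  - apply (is_derive_ext (fun s => beta kr b b' t1 t * (gg kr b b' t1 c1 t * (- kr * sin (kr * s))))).
    { intro s. rewrite Rmult_0_l, Rplus_0_l; reflexivity. }
    apply is_derive_scal. apply is_derive_scal. apply dH1.
Qed.


Lemma cont1_beta1 kr b b' t1 : cont1 (fun t => beta1 kr b b' t1 t).
Proof.
  unfold beta1. apply cont1_minus.
  - apply cont1_mult; [apply cont1_mult|].
    + apply cont1_const.
    + apply cont1_ex. intro t. unfold Phi1. auto_derive. apply EP1.
    + apply cont1_ex. intro t. unfold Phi2. auto_derive. apply EP2.
  - apply cont1_mult; [|apply cont1_const].
    unfold Phi3. apply cont1_mult; [apply cont1_const|]. apply cont1_shift. apply cP3.
Qed.

Lemma const_C1 c : C1_3 (fun _ _ _ => c) /\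
  dx (fun _ _ _ => c) = (fun _ _ _ => 0) /\ dy (fun _ _ _ => c) = (fun _ _ _ => 0) /\
  dt (fun _ _ _ => c) = (fun _ _ _ => 0).
Proof.
  split; [|split; [|split]]; try (fext; unfold dx, dy, dt; apply Derive_const).
  apply (C1_sep' (fun _ => c) (fun _ => 0) (fun _ => 1) (fun _ => 0)).
  - intro; apply (is_derive_const (V:=R_NormedModule)).
  - intro; apply (is_derive_const (V:=R_NormedModule)).
  - apply cont1_const. - apply cont1_const. - apply cont1_const. - apply cont1_const.
  - intros; ring.
Qed.

Lemma cos_per (k : Z) y : (0 <= IZR k) -> cos (IZR k * (y + 2 * PI)) = cos (IZR k * y).
Proof.
  intros Hk. apply le_IZR in Hk.
  replace (IZR k) with (INR (Z.to_nat k)) by (rewrite INR_IZR_INZ, Z2Nat.id; auto).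
  replace (INR (Z.to_nat k) * (y + 2 * PI)) with (INR (Z.to_nat k) * y + 2 * INR (Z.to_nat k) * PI) by ring.
  apply cos_period.
Qed.


Theorem mainTheorem12 :
  exists K M : R,
  forall (k : Z) (a b b' : R),
    K <= IZR k ->
    / 10 < a < 10 -> / 10 < b < 10 -> / 10 < b' < 10 -> b <= b' ->
  forall t1 c1 c2 : R,
    0 <= t1 -> 0 < c1 -> 0 < c2 ->
    c1 * exp (- IZR k * sqrt b * t1) = c2 * exp (- IZR k * sqrt b' * t1) ->
  exists (u : R -> R -> R -> R) (A : mat2field),
    C2_3 u /\ periodic_xy u /\ periodic_mat A /\
    reg_class 80 10 A /\
    (forall x y t, wave_op A u x y t = 0) /\
    (forall x y t, t <= t1 ->
       u x y t = c1 * (cos (IZR k * y) * exp (- IZR k * sqrt b * t)) /\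
       is_diag A x y t a b) /\
    (forall x y t, t1 + 400 <= t ->
       u x y t = c2 * (cos (IZR k * y) * exp (- IZR k * sqrt b' * t)) /\
       is_diag A x y t a b') /\
    (exists g : R -> R,
       C2_1 g /\
       forall t, t1 <= t <= t1 + 400 ->
         (forall x y, u x y t = g t * cos (IZR k * y)) /\
         forall alpha : nat, (alpha <= 2)%nat ->
           Rabs (Derive_n g alpha t)
             <= M * c1 * IZR k ^ alpha * exp (- IZR k * sqrt b * t)).
Proof.
  exists 100, 200.
  intros k a b b' Hk Ha Hb Hb' Hbb t1 c1 c2 Ht1 Hc1 Hc2 Hc.
  set (kr := IZR k) in *.
  assert (Hkr : kr <> 0) by lra.
  destruct (sqrt_facts b Hb) as [s1 [s2 s3]].
  destruct (sqrt_facts b' Hb') as [s1' [s2' s3']].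
  assert (cH : cont1 (fun y => cos (kr * y))) by (apply (cont1_deriv _ _ (dH kr))).
  assert (cH1 : cont1 (fun y => - kr * sin (kr * y))) by (apply (cont1_deriv _ _ (dH1 kr))).
  assert (cH2 : cont1 (fun y => - kr * kr * cos (kr * y))) by (apply (cont1_deriv _ _ (dH2 kr))).
  assert (cg : cont1 (gg kr b b' t1 c1)) by (apply (cont1_deriv _ _ (dgg kr b b' t1 c1))).
  assert (cg1 : cont1 (g1 kr b b' t1 c1)) by (apply (cont1_deriv _ _ (dg1 kr b b' t1 c1))).
  assert (cg2 : cont1 (g2 kr b b' t1 c1)) by (apply cont1_ex; apply eg2).
  exists (uu kr b b' t1 c1), (AA kr a b b' t1).
  split; [|split; [|split; [|split; [|split; [|split; [|split]]]]]].
  -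
    split; [|split; [|split]].
    + apply (C1_sep' _ _ _ _ _ (dgg kr b b' t1 c1) (dH kr)); auto.
    + rewrite dxu. apply (C1_sep' (fun _ => 0) (fun _ => 0) (fun _ => 1) (fun _ => 0)).
      * intro; apply (is_derive_const (V:=R_NormedModule)).
      * intro; apply (is_derive_const (V:=R_NormedModule)).
      * apply cont1_const. * apply cont1_const. * apply cont1_const. * apply cont1_const.
      * intros; ring.
    + rewrite dyu. apply (C1_sep' _ _ _ _ _ (dgg kr b b' t1 c1) (dH1 kr)); auto.
    + rewrite dtu. apply (C1_sep' _ _ _ _ _ (dg1 kr b b' t1 c1) (dH kr)); auto.
  -
    intros x y t. unfold uu. split; [reflexivity|]. unfold kr in *. rewrite cos_per; [reflexivity|lra].
  -
    repeat split.
  -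
    split.
    + intros x y t xi1 xi2. cbn [A11 A12 A21 A22 AA].
      destruct (beta_bounds kr b b' t1 t Hk Hb Hb' Hbb) as [[B1 B2] _].
      assert (/ 80 < a < 80) by lra.
      assert (0 <= xi1 ^ 2) by apply pow2_ge_0. assert (0 <= xi2 ^ 2) by apply pow2_ge_0.
      split; nra.
    + intros e He.
      destruct He as [-> | [-> | [-> | ->]]]; cbn [A11 A12 A21 A22 AA].
      * destruct (const_C1 a) as [C [E1 [E2 E3]]]. split; auto.
        intros x y t. rewrite E1, E2, E3. rewrite Rabs_R0. lra.
      * destruct (const_C1 0) as [C [E1 [E2 E3]]]. split; auto.
        intros x y t. rewrite E1, E2, E3. rewrite Rabs_R0. lra.
      * destruct (const_C1 0) as [C [E1 [E2 E3]]]. split; auto.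
        intros x y t. rewrite E1, E2, E3. rewrite Rabs_R0. lra.
      * split.
        -- apply (C1_sep' (beta kr b b' t1) (beta1 kr b b' t1) (fun _ => 1) (fun _ => 0)).
           ++ intro; apply dbeta; auto.
           ++ intro; apply (is_derive_const (V:=R_NormedModule)).
           ++ apply (cont1_deriv _ _ (fun t => dbeta kr b b' t1 t Hkr)).
           ++ apply cont1_beta1.
           ++ apply cont1_const.
           ++ apply cont1_const.
           ++ intros; ring.
        -- intros x y t. unfold dx, dy, dt. rewrite !Derive_const, Rabs_R0.
           assert (Eq : Derive (fun s : R => beta kr b b' t1 s) t = beta1 kr b b' t1 t) by (apply is_derive_unique; apply dbeta; auto). rewrite Eq.
           destruct (beta_bounds kr b b' t1 t Hk Hb Hb' Hbb) as [_ B]. repeat split; lra.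
  -
    intros x y t. apply wave_zero; auto.
  -
    intros x y t Ht. destruct (P_left (t - t1)) as [p0 [p1 p2]]; [lra|].
    split.
    + unfold uu, gg, Phi. rewrite p0.
      replace (- kr * (sqrt b * t + (sqrt b' - sqrt b) * 0)) with (- kr * sqrt b * t) by ring. ring.
    + unfold is_diag. cbn [A11 A12 A21 A22 AA]. repeat split.
      unfold beta, Phi1, Phi2. rewrite p1, p2. transitivity (sqrt b * sqrt b); [field; exact Hkr | exact s2].
  -
    intros x y t Ht. destruct (P_right (t - t1)) as [p0 [p1 p2]]; [lra|].
    split.
    + unfold uu, gg, Phi. rewrite p0.
      replace (- kr * (sqrt b * t + (sqrt b' - sqrt b) * (t - t1)))
        with ((- kr * sqrt b * t1) + (- kr * sqrt b' * t) + kr * sqrt b' * t1) by ring.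
      rewrite !exp_plus.
      assert (Einv : exp (- kr * sqrt b' * t1) * exp (kr * sqrt b' * t1) = 1).
      { rewrite <- exp_plus. replace (- kr * sqrt b' * t1 + kr * sqrt b' * t1) with 0 by ring.
        apply exp_0. }
      replace (c1 * (exp (- kr * sqrt b * t1) * exp (- kr * sqrt b' * t) * exp (kr * sqrt b' * t1)) * cos (kr * y))
        with ((c1 * exp (- kr * sqrt b * t1)) * exp (- kr * sqrt b' * t) * exp (kr * sqrt b' * t1) * cos (kr * y)) by ring.
      rewrite Hc.
      replace (c2 * exp (- kr * sqrt b' * t1) * exp (- kr * sqrt b' * t) * exp (kr * sqrt b' * t1) * cos (kr * y))
        with (c2 * exp (- kr * sqrt b' * t) * cos (kr * y) * (exp (- kr * sqrt b' * t1) * exp (kr * sqrt b' * t1))) by ring.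
      rewrite Einv. ring.
    + unfold is_diag. cbn [A11 A12 A21 A22 AA]. repeat split.
      unfold beta, Phi1, Phi2. rewrite p1, p2. transitivity (sqrt b' * sqrt b'); [field; exact Hkr | exact s2'].
  -
    exists (gg kr b b' t1 c1).
    assert (D1 : forall t, Derive_n (gg kr b b' t1 c1) 1 t = g1 kr b b' t1 c1 t).
    { intro t. simpl. apply is_derive_unique. apply dgg. }
    assert (D2 : forall t, Derive_n (gg kr b b' t1 c1) 2 t = g2 kr b b' t1 c1 t).
    { intro t. simpl. rewrite (Derive_ext _ (g1 kr b b' t1 c1)).
      - apply is_derive_unique. apply dg1.
      - intro s. apply is_derive_unique. apply dgg. }
    split.
    + split.
      * intro t. split.
        -- eexists; apply dgg.
        -- apply (ex_derive_ext (g1 kr b b' t1 c1)).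
           ++ intro s. symmetry. apply is_derive_unique. apply dgg.
           ++ eexists. apply dg1.
      * intro t. apply (continuity_pt_ext (g2 kr b b' t1 c1)).
        -- intro s. rewrite D2. reflexivity.
        -- apply cont1_cpt. auto.
    + intros t Ht. split; [intros; reflexivity|].
      intros alpha Halpha.
      destruct (g_bounds kr b b' t1 c1 t Hk Hb Hb' Hbb Hc1) as [G0 [G1 G2]].
      destruct alpha as [|[|[|alpha]]].
      * exact G0.
      * rewrite D1. exact G1.
      * rewrite D2. exact G2.
      * lia.
Qed.
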